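(* As formal power series in $x$, $$F(u,1,x):=\sum_{n\ge1}\frac{x^n}{n!}\sum_{p=1}^n\sum_{\pi\in\mathfrak S_n}u^{\chi_n(\pi,p)}=\frac{u}{2-u}\Bigl[(1-x)^{-2}-(1-x)^{-u}\Bigr],$$ and $$G(u,x):=\sum_{n\ge1}\frac{x^n}{n!}\sum_{\pi\in\mathfrak S_n}u^{\chi_n(\pi,n)}=\frac{u^2}{2-u}\Bigl[\frac1{1-x}+\frac{(1-x)^{1-u}}{1-u}\Bigr]-\frac{u^2}{1-u}-u\log(1-x).$$
   Context: $[n]=\{1,\dots,n\}$, $\mathfrak S_n$ the symmetric group on $[n]$, right action $i\pi$, products composed left to right; $\tau(i,j)$ the transposition exchanging $i,j$ ($\tau(n,n)$ the identity). For $\pi\in\mathfrak S_n$ let $q(\pi)=n\pi^{-1}$, and for $n\ge2$ let $\downarrow\pi\in\mathfrak S_{n-1}$ be the restriction to $[n-1]$ of $\tau(n,q(\pi))\pi$. The ''number of moves'' function $\chi_n(\pi,p)$, $\pi\in\mathfrak S_n$, $p\in[n]$, is defined recursively: $\chi_1(\mathrm{id},1)=1$; for $n\ge2$, with $q=q(\pi)$: $\chi_n(\pi,p)=\chi_{n-1}(\downarrow\pi,p)$ if $p\ne n,p\ne q$; $=1+\chi_{n-1}(\downarrow\pi,q)$ if $p=n\ne q$; $=1$ if $p=q\ne n$; $=1$ if $p=q=n$. Coefficients are rational functions of $u$; $(1-x)^{-u}$ and $(1-x)^{1-u}$ denote the binomial series. *)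

(* Defs.v *)
From HB Require Import structures.
From mathcomp Require Import all_boot all_order all_algebra all_fingroup.
Set Implicit Arguments. Unset Strict Implicit. Unset Printing Implicit Defensive.
Import Order.TTheory GRing.Theory.

(* Permutations of [n] = {1..n} are encoded as functions nat -> nat;
   only their values on 1..n matter. *)

Definition tau (n q : nat) (i : nat) : nat :=
  if i == n then q else if i == q then n else i.

Definition qpos (n : nat) (f : nat -> nat) : nat :=
  (find (fun i => f i == n) (iota 1 n)).+1.

(* down pi = restriction of tau(n,q(pi)) pi (composition left to right:
   i (tau pi) = (i tau) pi) *)
Definition down (n : nat) (f : nat -> nat) : nat -> nat :=
  fun i => f (tau n (qpos n f) i).

Fixpoint chi (n : nat) (f : nat -> nat) (p : nat) : nat :=
  match n with
  | 0 => 0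
  | n'.+1 =>
    if n' == 0 then 1 else
    let q := qpos n f in
    if (p != n) && (p != q) then chi n' (down n f) p
    else if (p == n) && (p != q) then (chi n' (down n f) q).+1
    else 1
  end.

(* A permutation of 'I_n (= {0..n-1}) viewed as a permutation of {1..n}
   acting by i |-> i pi. *)
Definition permfun (n : nat) (s : {perm 'I_n}) : nat -> nat :=
  fun i => match @insub _ (fun k => k < n) _ i.-1 with
           | Some j => (s j).+1
           | None => i
           end.

Local Open Scope ring_scope.

(* coefficient of x^n in F(u,1,x) *)
Definition Fcoef (R : fieldType) (u : R) (n : nat) : R :=
  if n == 0%N then 0 else
  (n`!%:R)^-1 * \sum_(p < n) \sum_(s : {perm 'I_n}) u ^+ chi n (permfun s) p.+1.

(* coefficient of x^n in G(u,x) *)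
Definition Gcoef (R : fieldType) (u : R) (n : nat) : R :=
  if n == 0%N then 0 else
  (n`!%:R)^-1 * \sum_(s : {perm 'I_n}) u ^+ chi n (permfun s) n.

Definition gbinom (R : fieldType) (a : R) (n : nat) : R :=
  (\prod_(k < n) (a - k%:R)) / n`!%:R.

(* coefficient of x^n in the binomial series (1 - x)^a *)
Definition pow1mx (R : fieldType) (a : R) (n : nat) : R :=
  (-1) ^+ n * gbinom a n.

(* coefficient of x^n in 1/(1-x) *)
Definition geomc (R : fieldType) (n : nat) : R := 1.

(* coefficient of x^n in the constant series c *)
Definition cstc (R : fieldType) (c : R) (n : nat) : R :=
  if n == 0%N then c else 0.

(* coefficient of x^n in log(1 - x) = - sum_{n>=1} x^n / n *)
Definition log1mx (R : fieldType) (n : nat) : R :=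
  if n == 0%N then 0 else - (n%:R)^-1.

(* Main.v *)
Require Import Defs.
From HB Require Import structures.
From mathcomp Require Import all_boot all_order all_algebra all_fingroup.
From mathcomp Require Import zify ring.
Import Order.TTheory GRing.Theory.
Set Implicit Arguments. Unset Strict Implicit. Unset Printing Implicit Defensive.

Lemma qpos_ext n f g : (forall i, 0 < i <= n -> f i = g i) -> qpos n f = qpos n g.
Proof.
move=> H; rewrite /qpos; congr _.+1; apply: eq_in_find => i.
rewrite mem_iota => /andP[h1 h2]; rewrite H //; apply/andP; split; lia.
Qed.

Lemma qpos_le n f : qpos n f <= n.+1.
Proof. by rewrite /qpos ltnS; have := find_size (fun i => f i == n) (iota 1 n); rewrite size_iota. Qed.

Lemma tau_range n q i : 0 < i <= n -> 0 < q -> 0 < tau n.+1 q i <= n.+1.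
Proof.
move=> hi hq; rewrite /tau.
case: (i =P n.+1) => [|_]; first lia.
by case: (i =P q) => _; lia.
Qed.

Lemma chi_ext n f g p : (forall i, 0 < i <= n -> f i = g i) -> chi n f p = chi n g p.
Proof.
elim: n f g p => [//|n IH] f g p H /=.
case: eqP => // _.
rewrite (@qpos_ext _ _ g H).
have Hd : forall i, 0 < i <= n -> down n.+1 f i = down n.+1 g i.
  move=> i hi; rewrite /down (@qpos_ext _ _ g H); apply: H.
  by apply: tau_range.
by rewrite !(IH _ _ _ Hd).
Qed.


Lemma permfun_val n (s : {perm 'I_n}) (k : 'I_n) : permfun s k.+1 = (s k).+1.
Proof. by rewrite /permfun /= valK. Qed.

Definition phi m (q0 : 'I_m.+1) (s' : 'S_m) : 'S_m.+1 :=
  (tperm q0 ord_max * lift_perm ord_max ord_max s')%g.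

Lemma phi_q0 m q0 (s' : 'S_m) : phi q0 s' q0 = ord_max.
Proof. by rewrite /phi permM tpermL lift_perm_id. Qed.

Lemma qpos_perm n (s : 'S_n) (q0 : 'I_n) : s q0 = (n.-1 : nat) :> nat ->
  qpos n (permfun s) = q0.+1.
Proof.
move=> hq; rewrite /qpos; congr _.+1.
set P := (fun i => permfun s i == n).
have hk : has P (iota 1 n).
  apply/hasP; exists q0.+1; first by rewrite mem_iota; apply/andP; split => //; rewrite add1n ltnS ltn_ord.
  by rewrite /P permfun_val hq prednK // (leq_ltn_trans (leq0n _) (ltn_ord q0)).
have hlt : find P (iota 1 n) < n by move: hk; rewrite has_find size_iota.
have := nth_find 0 hk; rewrite nth_iota // add1n /P.
rewrite -[find P _]/(nat_of_ord (Ordinal hlt)) permfun_val.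
move=> /eqP h.
have e : nat_of_ord (s (Ordinal hlt)) = n.-1 by move: h; lia.
have : s (Ordinal hlt) = s q0 by apply: val_inj; rewrite /= hq e.
by move/perm_inj => <-.
Qed.

Lemma qpos_phi m q0 (s' : 'S_m) : qpos m.+1 (permfun (phi q0 s')) = q0.+1.
Proof. by apply: qpos_perm; rewrite phi_q0. Qed.

Lemma lift_max_val m (k : 'I_m) : nat_of_ord (lift ord_max k) = k.
Proof. by rewrite lift_max. Qed.

Lemma down_phi m q0 (s' : 'S_m) i : 0 < i <= m ->
  down m.+1 (permfun (phi q0 s')) i = permfun s' i.
Proof.
move=> /andP[hi1 hi2].
have [k ->] : exists k : 'I_m, i = k.+1.
  have hl : i.-1 < m by lia.
  by exists (Ordinal hl) => /=; lia.
rewrite /down qpos_phi permfun_val.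
set j : 'I_m.+1 := lift ord_max k.
have hj : nat_of_ord j = k by rewrite lift_max_val.
have -> : tau m.+1 q0.+1 k.+1 = (tperm q0 ord_max j).+1.
  rewrite /tau permE /=.
  have -> : (k.+1 == m.+1) = false by apply/negbTE; rewrite eqSS neq_ltn ltn_ord.
  case: (j =P q0) => [<-|hne]; first by rewrite hj eqxx.
  have -> : (k.+1 == q0.+1) = false by apply/negbTE; rewrite eqSS -hj; apply/eqP => h; apply: hne; apply: val_inj.
  case: (j =P ord_max) => [hm|_]; last by rewrite hj.
  by exfalso; move: (ltn_ord k); rewrite -hj hm /=; lia.
by rewrite permfun_val /phi permM tpermK lift_perm_lift lift_max_val.
Qed.

Section Decomp.
Variable R : nmodType.
Local Open Scope ring_scope.

Lemma sum_phi m (F : 'S_m.+1 -> R) :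
  \sum_(s : 'S_m.+1) F s = \sum_(q0 < m.+1) \sum_(s' : 'S_m) F (phi q0 s').
Proof.
rewrite (partition_big (fun s : 'S_m.+1 => (s^-1)%g ord_max) predT) //=.
apply: eq_bigr => q0 _.
pose ulsf i (s : 'S_m.+1) k := odflt k (unlift (s i) (s (lift i k))).
have ulsfK i (s : 'S_m.+1) k: lift (s i) (ulsf i s k) = s (lift i k).
  rewrite /ulsf; have:= neq_lift i k.
  by rewrite -(can_eq (permK s)) => /unlift_some[] ? ? ->.
have inj_ulsf: injective (ulsf ord_max _).
  move=> s; apply: can_inj (ulsf (s ord_max) s^-1%g) _ => k'.
  by rewrite {1}/ulsf ulsfK !permK liftK.
pose g (s : 'S_m.+1) := perm (inj_ulsf (tperm q0 ord_max * s)%g).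
have hlp (t : 'S_m.+1) : t ord_max = ord_max -> lift_perm ord_max ord_max (perm (inj_ulsf t)) = t.
  move=> si0; apply/permP=> k.
  case: (unliftP ord_max k) => [k'|] ->; rewrite ?lift_perm_id //.
  by rewrite lift_perm_lift permE; have := ulsfK ord_max t k'; rewrite si0.
have tt : (tperm q0 ord_max * tperm q0 ord_max = 1)%g by rewrite tperm2.
rewrite (reindex (phi q0)); last first.
  exists g => [s' _ | s].
    rewrite /g /phi mulgA tt mul1g.
    by apply/permP=> k'; rewrite permE /ulsf lift_perm_lift lift_perm_id liftK.
  rewrite inE => hs.
  have hs' : s q0 = ord_max by move: hs; rewrite (can2_eq (permKV s) (permK s)) => /eqP <-.
  rewrite /g /phi hlp; first by rewrite mulgA tt mul1g.
  by rewrite permM tpermR.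
apply: eq_bigl => s'.
by rewrite (can2_eq (permKV _) (permK _)) phi_q0 eqxx.
Qed.
End Decomp.


Local Open Scope ring_scope.

Lemma chiS m f p : m != 0%N -> chi m.+1 f p =
  if (p != m.+1) && (p != qpos m.+1 f) then chi m (down m.+1 f) p
  else if (p == m.+1) && (p != qpos m.+1 f) then (chi m (down m.+1 f) (qpos m.+1 f)).+1
  else 1%N.
Proof. by case: m. Qed.

Lemma chi_phi m q0 (s' : 'S_m) p : m != 0%N -> chi m.+1 (permfun (phi q0 s')) p =
  if (p != m.+1) && (p != q0.+1) then chi m (permfun s') p
  else if (p == m.+1) && (p != q0.+1) then (chi m (permfun s') q0.+1).+1
  else 1%N.
Proof.
move=> hm; rewrite chiS // qpos_phi.
by rewrite !(@chi_ext m (down m.+1 (permfun (phi q0 s'))) (permfun s')) // => i hi; apply: down_phi.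
Qed.

Section Alg.
Variable R : fieldType.
Variable u : R.

Definition A m p := \sum_(s : 'S_m) u ^+ chi m (permfun s) p.
Definition B m := \sum_(p < m) A m p.+1.

Lemma sum_if n c (a b : R) : (c < n)%N ->
  \sum_(i < n) (if nat_of_ord i == c then b else a) = b + (n.-1)%:R * a.
Proof.
move=> hc; rewrite (bigD1 (Ordinal hc)) //= eqxx; congr (_ + _).
rewrite (eq_bigr (fun _ => a)); last by move=> i hi; rewrite ifF //; apply/negbTE; move: hi; apply: contra => /eqP h; apply/eqP/val_inj.
by rewrite sumr_const cardC1 card_ord mulr_natl.
Qed.

Lemma A_rec m p : (0 < m)%N -> (0 < p <= m)%N -> A m.+1 p = m%:R * A m p + u * m`!%:R.
Proof.
move=> hm hp; rewrite /A sum_phi.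
have hm' : m != 0%N by lia.
rewrite (eq_bigr (fun q0 : 'I_m.+1 => if nat_of_ord q0 == p.-1 then u * m`!%:R else A m p)).
  by rewrite sum_if; [rewrite addrC | lia].
move=> q0 _; rewrite /A.
have hpm : (p != m.+1) by lia.
case: eqP => hq.
  rewrite (eq_bigr (fun _ => u)); last by move=> s' _; rewrite chi_phi // hpm /= ifF ?ifF ?expr1 //; lia.
  by rewrite sumr_const card_Sn mulr_natr.
apply: eq_bigr => s' _; rewrite chi_phi // hpm /= ifT //; lia.
Qed.

Lemma A_top m : (0 < m)%N -> A m.+1 m.+1 = u * B m + u * m`!%:R.
Proof.
move=> hm; rewrite /A sum_phi big_ord_recr.
have hm' : m != 0%N by lia.
congr (_ + _).
  rewrite /B mulr_sumr; apply: eq_bigr => q0 _; rewrite /A mulr_sumr; apply: eq_bigr => s' _.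
  rewrite chi_phi // ifF; last by lia.
  have hne : (m.+1 != (widen_ord (leqnSn m) q0).+1) by rewrite /=; move: (ltn_ord q0); lia.
  by rewrite eqxx hne exprS.
rewrite (eq_bigr (fun _ => u)); last by move=> s' _; rewrite chi_phi //= !eqxx /= expr1.
by rewrite sumr_const card_Sn mulr_natr.
Qed.

Lemma A1 p : A 1 p = u.
Proof. by rewrite /A /= sumr_const card_Sn expr1. Qed.

Lemma B_rec m : B m.+1 = (m%:R + u) * B m + u * m.+1`!%:R.
Proof.
case: m => [|m]; first by rewrite /B big_ord1 big_ord0 A1 mulr0 add0r mulr1.
rewrite /B big_ord_recr /= A_top //.
rewrite (eq_bigr (fun p : 'I_m.+1 => m.+1%:R * A m.+1 p.+1 + u * m.+1`!%:R)); last first.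
  by move=> p _; rewrite A_rec //; move: (ltn_ord p); lia.
rewrite big_split /= -mulr_sumr sumr_const card_ord.
rewrite -[\sum_(i < m.+1) A m.+1 i.+1]/(B m.+1) (factS m.+1) (factS m) !natrM -mulr_natr.
rewrite -[m.+2]addn1 -[m.+1]addn1 !natrD; ring.
Qed.
End Alg.


Section Final.
Variable R : fieldType.
Hypothesis charR0 : [pchar R] =i pred0.

Lemma natn0 n : (n.+1%:R : R) != 0.
Proof. by rewrite (pcharf0P _).1. Qed.
Lemma factn0 n : (n`!%:R : R) != 0.
Proof. by rewrite (pcharf0P _).1 // -lt0n fact_gt0. Qed.

Lemma pow1mx0 (a : R) : pow1mx a 0 = 1.
Proof. by rewrite /pow1mx /gbinom big_ord0 expr0 mul1r divr1. Qed.

Lemma pow1mxS (a : R) m : pow1mx a m.+1 = pow1mx a m * (m%:R - a) / m.+1%:R.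
Proof.
rewrite /pow1mx /gbinom big_ord_recr /= factS natrM exprS.
have h1 := natn0 m; have h2 := factn0 m.
by field; rewrite -(natrD _ 1 m) add1n h1 h2.
Qed.

Lemma natS n : (n.+1%:R : R) = n%:R + 1.
Proof. by rewrite -natr1. Qed.

Lemma pow1mx_m2 n : pow1mx (-2 : R) n = n.+1%:R.
Proof.
elim: n => [|n IH]; first by rewrite pow1mx0.
rewrite pow1mxS IH opprK.
have h := natn0 n.+1. have h' := natn0 n.
rewrite [n.+2%:R]natS [n.+1%:R]natS in h h' *.
by field; rewrite ?h ?h'.
Qed.

Variable u : R.
Hypothesis hu1 : u != 1.
Hypothesis hu2 : u != 2.

Lemma hu2' : 2 - u != 0. Proof. by rewrite subr_eq0 eq_sym. Qed.
Lemma hu1' : 1 - u != 0. Proof. by rewrite subr_eq0 eq_sym. Qed.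

Lemma B_closed n : B u n = n`!%:R * (u / (2 - u)) * (n.+1%:R - pow1mx (- u) n).
Proof.
elim: n => [|n IH]; first by rewrite /B big_ord0 pow1mx0 subrr mulr0.
rewrite B_rec IH pow1mxS opprK factS natrM.
have h := natn0 n. have h2 := hu2'.
rewrite [n.+2%:R]natS [n.+1%:R]natS in h *.
by field; rewrite h h2.
Qed.

Lemma Q_rel m : pow1mx (1 - u) m.+1 = (u - 1) / m.+1%:R * pow1mx (- u) m.
Proof.
elim: m => [|m IH].
  by rewrite pow1mxS !pow1mx0 !divr1 mulr1 mul1r sub0r opprB.
rewrite pow1mxS IH pow1mxS.
have h := natn0 m.+1. have h' := natn0 m.
rewrite [m.+2%:R]natS [m.+1%:R]natS in h h' *.
by field; rewrite ?h ?h'.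
Qed.

Lemma A_top_all m : A u m.+1 m.+1 = u * B u m + u * m`!%:R.
Proof.
case: m => [|m]; last by apply: A_top.
by rewrite A1 /B big_ord0 mulr0 add0r mulr1.
Qed.

Lemma mainF n : Fcoef u n = u / (2 - u) * (pow1mx (-2) n - pow1mx (- u) n).
Proof.
case: n => [|n]; first by rewrite /Fcoef /= !pow1mx0 subrr mulr0.
have -> : Fcoef u n.+1 = (n.+1`!%:R)^-1 * B u n.+1 by [].
rewrite B_closed pow1mx_m2.
have h := factn0 n.+1. have h2 := hu2'.
by field; rewrite ?h ?h2.
Qed.

Lemma mainG n : Gcoef u n = u ^+ 2 / (2 - u) * (geomc R n + pow1mx (1 - u) n / (1 - u))
                 - cstc (u ^+ 2 / (1 - u)) n - u * log1mx R n.
Proof.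
have h1 := hu1'. have h2 := hu2'.
case: n => [|n].
  rewrite /Gcoef /cstc /log1mx /geomc /= pow1mx0 mulr0 subr0.
  by field; rewrite ?h1 ?h2.
have -> : Gcoef u n.+1 = (n.+1`!%:R)^-1 * A u n.+1 n.+1 by [].
rewrite A_top_all B_closed Q_rel /cstc /log1mx /geomc /= subr0 factS natrM.
have h := factn0 n. have h' := natn0 n.
rewrite [n.+1%:R]natS in h' *.
by field; rewrite ?h ?h' ?h1 ?h2.
Qed.

End Final.

Local Open Scope ring_scope.

Theorem mainTheorem8 (R : fieldType) (charR0 : [pchar R] =i pred0)
  (u : R) (hu1 : u != 1) (hu2 : u != 2) :
  (forall n : nat,
     Fcoef u n = u / (2 - u) * (pow1mx (-2) n - pow1mx (- u) n)) /\
  (forall n : nat,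
     Gcoef u n = u ^+ 2 / (2 - u) * (geomc R n + pow1mx (1 - u) n / (1 - u))
                 - cstc (u ^+ 2 / (1 - u)) n - u * log1mx R n).
Proof.
split => n; [exact: mainF | exact: mainG].
Qed.
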